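(* Let $a=\{a_k\}_{k=0}^\infty$ be a log-convex sequence with $1=a_0>a_1\geq a_2\geq\cdots$, $\lim_{k\to\infty}a_k=0$ and $\sum_{k=0}^\infty a_k=\infty$. Define $\{b_k\}_{k=0}^\infty$ by $b_0=1/a_0$ and $b_k=-\frac{1}{a_0}\sum_{j=0}^{k-1}a_{k-j}b_j$ for $k\geq1$ (the entries of the inverse of the half-infinite lower triangular Toeplitz matrix $A$ with $A_{ij}=a_{i-j}$ for $i\geq j$). Then $\sum_{k=0}^\infty|b_k|=2$; in particular the inverse matrix has summable entries.
   Context: A sequence $\{a_k\}_{k\ge0}$ is log-convex if $a_k\geq0$ for all $k$ and $a_k^2\leq a_{k-1}a_{k+1}$ for all $k\geq1$. *)

(* Defs.v *)
From Stdlib Require Import Reals.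
From Coquelicot Require Import Coquelicot.
Open Scope R_scope.

Definition log_convex (a : nat -> R) : Prop :=
  (forall k, 0 <= a k) /\ (forall k, (1 <= k)%nat -> (a k)^2 <= a (k - 1)%nat * a (k + 1)%nat).

(* Main.v *)
Require Import Defs.
From Stdlib Require Import Reals.
From Coquelicot Require Import Coquelicot.
From Stdlib Require Import Lra Lia Psatz.
Open Scope R_scope.

Theorem theorem5 (a b : nat -> R) :
  log_convex a ->
  a 0%nat = 1 ->
  a 0%nat > a 1%nat ->
  (forall k, (1 <= k)%nat -> a k >= a (S k)) ->
  is_lim_seq a 0 ->
  is_lim_seq (sum_n a) p_infty ->
  b 0%nat = 1 / a 0%nat ->
  (forall k, (1 <= k)%nat ->
     b k = - (1 / a 0%nat) * sum_n (fun j => a (k - j)%nat * b j) (k - 1)%nat) ->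
  is_series (fun k => Rabs (b k)) 2.
Proof.
  intros [Hnn Hlc] Ha0 Ha01 Hdec _ Hdiv Hb0 Hrec.
  assert (Hb0' : b 0%nat = 1) by (rewrite Hb0, Ha0; field).
  assert (Hrec' : forall n, b (S n) = - sum_f_R0 (fun j => a (S n - j)%nat * b j) n).
  { intro n. rewrite Hrec by lia. rewrite Ha0, sum_n_Reals.
    replace (S n - 1)%nat with n by lia. field. }
  assert (Hstep : forall k, a (S k) <= a k).
  { intros [|k]; [lra|]. apply Rge_le, Hdec; lia. }
  assert (Hmono : forall m d, a (m + d)%nat <= a m).
  { intros m d; induction d as [|d IH].
    - rewrite Nat.add_0_r; lra.
    - replace (m + S d)%nat with (S (m + d)) by lia. specialize (Hstep (m+d)%nat); lra. }
  assert (Hmono' : forall m n, (m <= n)%nat -> a n <= a m).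
  { intros m n H. replace n with (m + (n - m))%nat by lia. apply Hmono. }
  assert (Hpos : forall k, 0 < a k).
  { intro k. destruct (Rle_lt_dec (a k) 0) as [Hk|Hk]; [|exact Hk]. exfalso.
    assert (Hz : forall n, (k <= n)%nat -> a n = 0).
    { intros n Hn. specialize (Hmono' k n Hn). specialize (Hnn n). lra. }
    assert (Hb : forall n, sum_n a n <= sum_n a k).
    { intro n. rewrite !sum_n_Reals. destruct (Compare_dec.le_lt_dec n k) as [H|H].
      - replace k with (n + (k - n))%nat by lia. generalize (k - n)%nat. intro d.
        induction d as [|d IH]. rewrite Nat.add_0_r; lra.
        replace (n + S d)%nat with (S (n + d)) by lia. rewrite tech5.
        specialize (Hnn (S (n+d))). lra.
      - replace n with (k + (n - k))%nat by lia. generalize (n - k)%nat. intro d.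
        induction d as [|d IH]. rewrite Nat.add_0_r; lra.
        replace (k + S d)%nat with (S (k + d)) by lia. rewrite tech5.
        rewrite (Hz (S (k+d))) by lia. lra. }
    pose proof (is_lim_seq_le _ _ _ _ Hb Hdiv (is_lim_seq_const (sum_n a k))) as Hc.
    simpl in Hc. exact Hc. }
  assert (Hratio : forall p d, a (S p) * a (p + d)%nat <= a p * a (S (p + d))).
  { intros p d. induction d as [|d IH].
    - rewrite Nat.add_0_r; lra.
    - replace (p + S d)%nat with (S (p + d)) by lia.
      pose proof (Hlc (S (p+d)) ltac:(lia)) as L.
      replace (S (p + d) - 1)%nat with (p + d)%nat in L by lia.
      replace (S (p + d) + 1)%nat with (S (S (p + d))) in L by lia.
      set (x := a p) in *. set (y := a (S p)) in *. set (u := a (p+d)%nat) in *.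
      set (v := a (S (p+d))) in *. set (w := a (S (S (p+d)))) in *.
      assert (0 < u) by apply Hpos. assert (0 < v) by apply Hpos.
      assert (0 <= y) by apply Hnn. assert (0 <= x) by apply Hnn.
      assert (Hk : u * v * (y * v) <= u * v * (x * w)).
      { replace (u * v * (y * v)) with ((y * u) * v ^ 2) by ring.
        replace (u * v * (x * w)) with ((x * v) * (u * w)) by ring.
        apply Rle_trans with ((x * v) * v ^ 2).
        - apply Rmult_le_compat_r; [nra|lra].
        - apply Rmult_le_compat_l; [nra|lra]. }
      apply Rmult_le_reg_l with (u * v); [nra|exact Hk]. }
  assert (Hratio' : forall p q, (p <= q)%nat -> a (S p) * a q <= a p * a (S q)).
  { intros p q H. replace q with (p + (q - p))%nat by lia. apply Hratio. }
  assert (Hconv : forall n, sum_f_R0 (fun j => a (S n - j)%nat * b j) (S n) = 0).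
  { intro n. rewrite tech5, Nat.sub_diag, Ha0, (Hrec' n). ring. }
  assert (Hkal : forall n j, (1 <= j <= S n)%nat -> b j <= 0).
  { induction n as [|n IH].
    - intros j Hj. replace j with 1%nat by lia. rewrite Hrec'. simpl.
      rewrite Hb0'. specialize (Hnn 1%nat). lra.
    - intros j Hj. destruct (Nat.eq_dec j (S (S n))) as [->|Hne];
        [|apply IH; lia].
      set (m := S n).
      assert (Hid : a m * b (S m) =
        sum_f_R0 (fun j => b j * (a (S m) * a (m - j)%nat - a m * a (S m - j)%nat)) m).
      { rewrite (sum_eq _ (fun j => (a (m - j)%nat * b j) * a (S m)
                               - (a (S m - j)%nat * b j) * a m)).
        - rewrite minus_sum, <- !scal_sum. unfold m. rewrite Hconv, (Hrec' (S n)). ring.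
        - intros i _. ring. }
      assert (Hle : sum_f_R0 (fun j => b j * (a (S m) * a (m - j)%nat - a m * a (S m - j)%nat)) m
                    <= sum_f_R0 (fun _ => 0) m).
      { apply sum_Rle. intros i Hi. destruct i as [|i].
        - rewrite !Nat.sub_0_r. lra.
        - assert (b (S i) <= 0) by (apply IH; unfold m in Hi; lia).
          replace (S m - S i)%nat with (S (m - S i)) by lia.
          pose proof (Hratio' (m - S i)%nat m ltac:(lia)). nra. }
      rewrite (sum_eq_R0 (fun _ => 0) m) in Hle; [|intros; reflexivity]. rewrite <- Hid in Hle.
      pose proof (Hpos m). nra. }
  assert (Hneg : forall j, (1 <= j)%nat -> b j <= 0).
  { intros j Hj. apply (Hkal j); lia. }
  set (B := fun n => sum_f_R0 b n).
  set (A := fun n => sum_f_R0 a n).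
  assert (HA : forall n, A (S n) = A n + a (S n)) by (intro; apply tech5).
  assert (HAmono : forall m d, A m <= A (m + d)%nat).
  { intros m d; induction d as [|d IH]. rewrite Nat.add_0_r; lra.
    replace (m + S d)%nat with (S (m + d)) by lia. rewrite HA. specialize (Hnn (S (m+d))). lra. }
  assert (HApos : forall n, 0 < A n).
  { intro n. pose proof (HAmono 0%nat n). simpl in H. unfold A in *. simpl in *. lra. }
  assert (Hid1 : forall n, sum_f_R0 (fun j => b j * A (n - j)%nat) n = 1).
  { induction n as [|n IH].
    - simpl. unfold A; simpl. rewrite Hb0', Ha0. ring.
    - rewrite tech5, Nat.sub_diag.
      rewrite (sum_eq _ (fun j => b j * A (n - j)%nat + a (S n - j)%nat * b j)).
      + rewrite sum_plus, IH.
        pose proof (Hconv n) as Hc. rewrite tech5, Nat.sub_diag in Hc.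
        assert (A 0%nat = 1) by (unfold A; simpl; exact Ha0). rewrite Ha0 in Hc. rewrite H, Rmult_1_r, Rplus_assoc. rewrite Rmult_1_l in Hc. rewrite Hc. ring.
      + intros i Hi. replace (S n - i)%nat with (S (n - i)) by lia. rewrite HA. ring. }
  assert (HBup : forall n, A n * B n <= 1).
  { intro n. rewrite <- (Hid1 n). unfold B. rewrite scal_sum. apply sum_Rle.
    intros i Hi. destruct i as [|i].
    - rewrite Nat.sub_0_r. lra.
    - pose proof (Hneg (S i) ltac:(lia)).
      pose proof (HAmono (n - S i)%nat (S i)). replace (n - S i + S i)%nat with n in H0 by lia.
      nra. }
  assert (HBlo : forall n, 0 <= B n).
  { intros [|n].
    - unfold B; simpl; lra.
    - assert (Hs : sum_f_R0 (fun j => a (S n - j)%nat * b j) (S n) <= a (S n) * B (S n)).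
      { unfold B. rewrite scal_sum. apply sum_Rle. intros i Hi. destruct i as [|i].
        - rewrite Nat.sub_0_r. lra.
        - pose proof (Hneg (S i) ltac:(lia)).
          pose proof (Hmono' (S n - S i)%nat (S n) ltac:(lia)). nra. }
      rewrite Hconv in Hs. pose proof (Hpos (S n)). nra. }
  assert (HBlim : is_lim_seq B 0).
  { apply is_lim_seq_le_le with (u := fun _ => 0) (w := fun n => / A n).
    - intro n. split; [apply HBlo|]. pose proof (HApos n).
      apply Rmult_le_reg_l with (A n); [lra|]. rewrite Rinv_r by lra. apply HBup.
    - apply is_lim_seq_const.
    - change (Finite 0) with (Rbar_inv p_infty). apply is_lim_seq_inv.
      + unfold A. eapply is_lim_seq_ext; [|exact Hdiv]. intro n. apply sum_n_Reals.
      + discriminate. }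
  assert (Hsum : forall n, 2 - B n = sum_n (fun k => Rabs (b k)) n).
  { intro n. rewrite sum_n_Reals. unfold B. induction n as [|n IH].
    - simpl. rewrite Hb0', Rabs_R1. lra.
    - rewrite !tech5, <- IH. rewrite Rabs_left1 by (apply Hneg; lia). lra. }
  change (is_lim_seq (sum_n (fun k => Rabs (b k))) 2).
  eapply is_lim_seq_ext; [exact Hsum|].
  replace (Finite 2) with (Rbar_minus 2 0) by (simpl; f_equal; ring).
  apply is_lim_seq_minus'; [apply is_lim_seq_const|exact HBlim].
Qed.
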